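(* Let $n\ge2$, $\lambda_0\in\mathbb D\setminus\{0\}$ and $y^0\in\widetilde{\mathbb G}_n$. Then there exists an analytic $\psi:\mathbb D\to\widetilde\Gamma_n$ with $\psi(0)=(0,\dots,0)$ and $\psi(\lambda_0)=y^0$ if and only if there exists an analytic $\psi:\mathbb D\to\widetilde{\mathbb G}_n$ with $\psi(0)=(0,\dots,0)$ and $\psi(\lambda_0)=y^0$.
   Context: $\mathbb D$ is the open unit disc. $\widetilde{\mathbb G}_n=\{(y_1,\dots,y_{n-1},q)\in\mathbb C^n: q\in\mathbb D,\ y_j=\beta_j+\bar\beta_{n-j}q$ for some $\beta_j\in\mathbb C$ with $|\beta_j|+|\beta_{n-j}|<\binom{n}{j}$, $j=1,\dots,n-1\}$; $\widetilde\Gamma_n$ is its closure. *)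

(* Defs.v *)
From Stdlib Require Import Reals.
From Coquelicot Require Import Coquelicot.
Open Scope R_scope.

(* A point of C^n is encoded as (y, q) with y : nat -> C; only the
   coordinates y 1, ..., y (n-1) are meaningful, q is the last coordinate. *)

Definition inD (z : C) : Prop := Cmod z < 1.

Definition binom (n j : nat) : R := Binomial.C n j.

Definition tG (n : nat) (y : nat -> C) (q : C) : Prop :=
  inD q /\
  exists beta : nat -> C,
    forall j : nat, (1 <= j <= n - 1)%nat ->
      y j = Cplus (beta j) (Cmult (Cconj (beta (n - j)%nat)) q) /\
      Cmod (beta j) + Cmod (beta (n - j)%nat) < binom n j.

Definition tGamma (n : nat) (y : nat -> C) (q : C) : Prop :=
  forall eps : R, 0 < eps ->
    exists (y' : nat -> C) (q' : C), tG n y' q' /\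
      (forall j : nat, (1 <= j <= n - 1)%nat -> Cmod (Cminus (y' j) (y j)) < eps) /\
      Cmod (Cminus q' q) < eps.

Definition holo_on_D (f : C -> C) : Prop :=
  forall z : C, inD z -> ex_derive (K := C_AbsRing) (V := C_NormedModule) f z.

Definition analytic_interp (S : (nat -> C) -> C -> Prop) (n : nat)
    (psiy : C -> nat -> C) (psiq : C -> C)
    (lam0 : C) (y0 : nat -> C) (q0 : C) : Prop :=
  (forall j : nat, (1 <= j <= n - 1)%nat -> holo_on_D (fun z => psiy z j)) /\
  holo_on_D psiq /\
  (forall z : C, inD z -> S (psiy z) (psiq z)) /\
  (forall j : nat, (1 <= j <= n - 1)%nat -> psiy (RtoC 0) j = RtoC 0) /\
  psiq (RtoC 0) = RtoC 0 /\
  (forall j : nat, (1 <= j <= n - 1)%nat -> psiy lam0 j = y0 j) /\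
  psiq lam0 = q0.

(* Main.v *)
Require Import Defs.
From Stdlib Require Import Reals.
From Coquelicot Require Import Coquelicot.
From Stdlib Require Import Lra Lia.
Open Scope R_scope.

Lemma Cmod_le_sum (a b : R) : Cmod (a, b) <= Rabs a + Rabs b.
Proof.
  unfold Cmod; simpl.
  apply Rsqr_incr_0_var.
  - rewrite Rsqr_sqrt by nra. unfold Rsqr.
    pose proof (Rabs_pos a); pose proof (Rabs_pos b).
    replace (a * (a * 1) + b * (b * 1)) with (Rabs a * Rabs a + Rabs b * Rabs b).
    + nra.
    + rewrite <- !Rabs_mult. rewrite !Rabs_pos_eq by nra. ring.
  - pose proof (Rabs_pos a); pose proof (Rabs_pos b); lra.
Qed.

Lemma fst_le_Cmod (c : C) : Rabs (fst c) <= Cmod c.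
Proof. apply re_le_Cmod. Qed.

Lemma snd_le_Cmod (c : C) : Rabs (snd c) <= Cmod c.
Proof.
  destruct c as [a b]. unfold Cmod; simpl.
  rewrite <- sqrt_Rsqr_abs. apply sqrt_le_1_alt. unfold Rsqr. nra.
Qed.

Lemma sin_lip x y : Rabs (sin x - sin y) <= Rabs (x - y).
Proof.
  destruct (MVT_abs sin cos y x) as [c [Hc _]].
  { intros c _. apply derivable_pt_lim_sin. }
  rewrite Hc. pose proof (COS_bound c). 
  rewrite <- (Rmult_1_l (Rabs (x - y))) at 2.
  apply Rmult_le_compat_r; [apply Rabs_pos|]. apply Rabs_le; lra.
Qed.

Lemma cos_lip x y : Rabs (cos x - cos y) <= Rabs (x - y).
Proof.
  destruct (MVT_abs cos (fun t => - sin t) y x) as [c [Hc _]].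
  { intros c _. apply derivable_pt_lim_cos. }
  rewrite Hc. pose proof (SIN_bound c). 
  rewrite <- (Rmult_1_l (Rabs (x - y))) at 2.
  apply Rmult_le_compat_r; [apply Rabs_pos|]. apply Rabs_le; lra.
Qed.

Definition pol (w : C) (r t : R) : C := (fst w + r * cos t, snd w + r * sin t).

Lemma pol_lip w r t r' t' :
  Cmod (pol w r t - pol w r' t') <= 2 * Rabs (r - r') + 2 * Rabs r' * Rabs (t - t').
Proof.
  unfold pol. destruct w as [w1 w2]. cbn [fst snd].
  replace (Cminus (w1 + r * cos t, w2 + r * sin t) (w1 + r' * cos t', w2 + r' * sin t'))
    with (((r - r') * cos t + r' * (cos t - cos t')), ((r - r') * sin t + r' * (sin t - sin t'))).
  2:{ unfold Cminus, Cplus, Copp; simpl. f_equal; ring. }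
  eapply Rle_trans; [apply Cmod_le_sum|].
  pose proof (Rabs_triang ((r - r') * cos t) (r' * (cos t - cos t'))).
  pose proof (Rabs_triang ((r - r') * sin t) (r' * (sin t - sin t'))).
  rewrite !Rabs_mult in *.
  pose proof (cos_lip t t'); pose proof (sin_lip t t').
  assert (Rabs (cos t) <= 1) by (apply Rabs_le; apply COS_bound).
  assert (Rabs (sin t) <= 1) by (apply Rabs_le; apply SIN_bound).
  pose proof (Rabs_pos (r - r')); pose proof (Rabs_pos r').
  pose proof (Rabs_pos (cos t)); pose proof (Rabs_pos (sin t)).
  assert (Rabs (r - r') * Rabs (cos t) <= Rabs (r - r')) by nra.
  assert (Rabs (r - r') * Rabs (sin t) <= Rabs (r - r')) by nra.
  assert (Rabs r' * Rabs (cos t - cos t') <= Rabs r' * Rabs (t - t')) by (apply Rmult_le_compat_l; lra).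
  assert (Rabs r' * Rabs (sin t - sin t') <= Rabs r' * Rabs (t - t')) by (apply Rmult_le_compat_l; lra).
  lra.
Qed.

Lemma pol_dist w r t : Cmod (pol w r t - w) = Rabs r.
Proof.
  unfold pol, Cmod. destruct w as [w1 w2]; simpl.
  replace ((w1 + r * cos t + - w1) * ((w1 + r * cos t + - w1) * 1) +
           (w2 + r * sin t + - w2) * ((w2 + r * sin t + - w2) * 1)) with ((r * r) * (sin t ^ 2 + cos t ^ 2)) by ring.
  replace (sin t ^ 2 + cos t ^ 2) with 1 by (rewrite <- (sin2_cos2 t); unfold Rsqr; ring).
  rewrite Rmult_1_r. apply sqrt_Rsqr_abs.
Qed.

Lemma normC (x : C) : @norm C_AbsRing C_NormedModule x = Cmod x.
Proof. reflexivity. Qed.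

Lemma deriv_eps (f : C -> C) z l :
  is_derive (K:=C_AbsRing) (V:=C_NormedModule) f z l ->
  forall eps, 0 < eps -> exists del, 0 < del /\
    forall z', Cmod (z' - z) < del ->
      Cmod (f z' - f z - l * (z' - z)) <= eps * Cmod (z' - z).
Proof.
  intros [_ H] eps Heps.
  specialize (H z (fun P H => H) (mkposreal eps Heps)).
  destruct (locally_norm_le_locally (V:=AbsRing_NormedModule C_AbsRing) z _ H) as [d Hd].
  exists d; split; [apply cond_pos|].
  intros z' Hz'. specialize (Hd z' Hz'). simpl in Hd.
  rewrite normC in Hd. unfold minus, plus, opp, scal in Hd; simpl in Hd.
  unfold mult in Hd; simpl in Hd.
  replace (f z' - f z - l * (z' - z))%C with (f z' + - f z + - ((z' + - z) * l))%C by ring.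
  exact Hd.
Qed.

Lemma eps_deriv (f : C -> C) z l :
  (forall eps, 0 < eps -> exists del, 0 < del /\
    forall z', Cmod (z' - z) < del ->
      Cmod (f z' - f z - l * (z' - z)) <= eps * Cmod (z' - z)) ->
  is_derive (K:=C_AbsRing) (V:=C_NormedModule) f z l.
Proof.
  intros H. split; [apply is_linear_scal_l|].
  intros x Hx. apply (is_filter_lim_locally_unique (K:=C_AbsRing) (V:=AbsRing_NormedModule C_AbsRing)) in Hx. subst x.
  intros eps. destruct (H eps (cond_pos eps)) as [d [Hd H']].
  apply (locally_le_locally_norm (V:=AbsRing_NormedModule C_AbsRing) z).
  exists (mkposreal d Hd). intros z' Hz'. unfold ball_norm in Hz'. simpl in Hz'.
  specialize (H' z' Hz').
  rewrite normC. unfold minus, plus, opp, scal; simpl. unfold mult; simpl.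
  replace (f z' + - f z + - ((z' + - z) * l))%C with (f z' - f z - l * (z' - z))%C by ring.
  exact H'.
Qed.

Lemma cont_eps (f : R -> R) t0 :
  (forall eps, 0 < eps -> exists del, 0 < del /\ forall t, Rabs (t - t0) < del -> Rabs (f t - f t0) < eps) ->
  continuity_pt f t0.
Proof.
  intros H eps Heps. destruct (H eps Heps) as [d [Hd H']]. exists d. split; [exact Hd|].
  intros x [_ Hx]. simpl in *. unfold R_dist in *. apply H'. exact Hx.
Qed.

Lemma fst_minus (a b : C) : fst (a - b)%C = fst a - fst b.
Proof. destruct a, b; simpl; ring. Qed.
Lemma snd_minus (a b : C) : snd (a - b)%C = snd a - snd b.
Proof. destruct a, b; simpl; ring. Qed.

Definition ccont (h : C -> C) (z : C) := forall eps, 0 < eps -> exists del, 0 < del /\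
  forall z', Cmod (z' - z) < del -> Cmod (h z' - h z) < eps.

Lemma comp_cont (h : C -> C) (gam : R -> C) t0 K :
  0 <= K -> (forall t, Cmod (gam t - gam t0) <= K * Rabs (t - t0)) ->
  ccont h (gam t0) ->
  continuity_pt (fun t => fst (h (gam t))) t0 /\ continuity_pt (fun t => snd (h (gam t))) t0.
Proof.
  intros HK Hg Hh.
  assert (H : forall eps, 0 < eps -> exists del, 0 < del /\ forall t, Rabs (t - t0) < del ->
            Cmod (h (gam t) - h (gam t0)) < eps).
  { intros eps Heps. destruct (Hh eps Heps) as [d [Hd H']].
    exists (d / (K + 1)). split; [apply Rdiv_lt_0_compat; lra|].
    intros t Ht. apply H'. eapply Rle_lt_trans; [apply Hg|].
    apply Rle_lt_trans with (K * (d / (K + 1))).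
    - apply Rmult_le_compat_l; lra.
    - apply Rmult_lt_reg_r with (K + 1); [lra|]. 
      replace (K * (d / (K + 1)) * (K + 1)) with (K * d) by (field; lra). nra. }
  split; apply cont_eps; intros eps Heps; destruct (H eps Heps) as [d [Hd H']];
    exists d; split; auto; intros t Ht; specialize (H' t Ht).
  - rewrite <- fst_minus. eapply Rle_lt_trans; [apply fst_le_Cmod|exact H'].
  - rewrite <- snd_minus. eapply Rle_lt_trans; [apply snd_le_Cmod|exact H'].
Qed.

Lemma cont_of_deriv (h : C -> C) z l :
  is_derive (K:=C_AbsRing) (V:=C_NormedModule) h z l -> ccont h z.
Proof.
  intros Hd eps Heps. destruct (deriv_eps h z l Hd 1 Rlt_0_1) as [d [Hd0 H']].
  pose proof (Cmod_ge_0 l).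
  exists (Rmin d (eps / (Cmod l + 2))). split.
  { apply Rmin_pos; [exact Hd0|apply Rdiv_lt_0_compat; lra]. }
  intros z' Hz'. 
  assert (H1 : Cmod (z' - z) < d) by (eapply Rlt_le_trans; [exact Hz'|apply Rmin_l]).
  assert (H2 : Cmod (z' - z) < eps / (Cmod l + 2)) by (eapply Rlt_le_trans; [exact Hz'|apply Rmin_r]).
  specialize (H' z' H1).
  replace (h z' - h z)%C with ((h z' - h z - l * (z' - z)) + l * (z' - z))%C by ring.
  eapply Rle_lt_trans; [apply Cmod_triangle|]. rewrite Cmod_mult.
  pose proof (Cmod_ge_0 (z' - z)).
  apply Rle_lt_trans with ((Cmod l + 1) * Cmod (z' - z)); [nra|].
  apply Rle_lt_trans with ((Cmod l + 1) * (eps / (Cmod l + 2))).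
  - apply Rmult_le_compat_l; lra.
  - apply Rmult_lt_reg_r with (Cmod l + 2); [lra|].
    replace ((Cmod l + 1) * (eps / (Cmod l + 2)) * (Cmod l + 2)) with ((Cmod l + 1) * eps) by (field; lra).
    nra.
Qed.

Lemma RInt_abs_bound (f : R -> R) a b M : a <= b -> ex_RInt f a b ->
  (forall t, a <= t <= b -> Rabs (f t) <= M) -> Rabs (RInt f a b) <= M * (b - a).
Proof.
  intros Hab Hex Hb.
  assert (H := norm_RInt_le f (fun _ => M) a b (RInt f a b) (scal (b - a) M) Hab Hb (RInt_correct f a b Hex) (is_RInt_const a b M)).
  unfold scal in H; simpl in H. unfold mult in H; simpl in H. rewrite Rmult_comm. exact H.
Qed.

Section Goursat.
Variables A1 B1 A2 B2 : R.
Variable Phi : R -> R -> R -> R -> R.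
Hypothesis add1 : forall a1 m b1 a2 b2, A1 <= a1 -> a1 <= m -> m <= b1 -> b1 <= B1 ->
  A2 <= a2 -> a2 <= b2 -> b2 <= B2 ->
  Phi a1 b1 a2 b2 = Phi a1 m a2 b2 + Phi m b1 a2 b2.
Hypothesis add2 : forall a1 b1 a2 m b2, A1 <= a1 -> a1 <= b1 -> b1 <= B1 ->
  A2 <= a2 -> a2 <= m -> m <= b2 -> b2 <= B2 ->
  Phi a1 b1 a2 b2 = Phi a1 b1 a2 m + Phi a1 b1 m b2.
Hypothesis loc : forall x y, A1 <= x <= B1 -> A2 <= y <= B2 ->
  forall eps, 0 < eps -> exists del, 0 < del /\
  forall a1 b1 a2 b2, A1 <= a1 -> a1 <= x -> x <= b1 -> b1 <= B1 ->
    A2 <= a2 -> a2 <= y -> y <= b2 -> b2 <= B2 -> b1 - a1 < del -> b2 - a2 < del ->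
    Rabs (Phi a1 b1 a2 b2) <= eps * ((b1 - a1) + (b2 - a2))^2.

Definition rect := (R * R * R * R)%type.
Definition PhiR (r : rect) := let '(a1, b1, a2, b2) := r in Phi a1 b1 a2 b2.
Definition inreg (r : rect) := let '(a1, b1, a2, b2) := r in
  A1 <= a1 /\ a1 <= b1 /\ b1 <= B1 /\ A2 <= a2 /\ a2 <= b2 /\ b2 <= B2.
Definition quarters (r : rect) : rect * rect * rect * rect :=
  let '(a1, b1, a2, b2) := r in
  let m1 := (a1 + b1) / 2 in let m2 := (a2 + b2) / 2 in
  ((a1, m1, a2, m2), (m1, b1, a2, m2), (a1, m1, m2, b2), (m1, b1, m2, b2)).
Definition sel (r : rect) : rect :=
  let '(q1, q2, q3, q4) := quarters r in
  if Rle_dec (Rabs (PhiR r) / 4) (Rabs (PhiR q1)) then q1 else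
  if Rle_dec (Rabs (PhiR r) / 4) (Rabs (PhiR q2)) then q2 else
  if Rle_dec (Rabs (PhiR r) / 4) (Rabs (PhiR q3)) then q3 else q4.

Definition sub (r s : rect) := let '(a1, b1, a2, b2) := r in let '(c1, d1, c2, d2) := s in
  c1 <= a1 /\ b1 <= d1 /\ c2 <= a2 /\ b2 <= d2.

Lemma sel_spec r : inreg r ->
  inreg (sel r) /\ sub (sel r) r /\ Rabs (PhiR r) / 4 <= Rabs (PhiR (sel r)) /\
  (let '(a1, b1, a2, b2) := r in let '(c1, d1, c2, d2) := sel r in
   d1 - c1 = (b1 - a1) / 2 /\ d2 - c2 = (b2 - a2) / 2).
Proof.
  destruct r as [[[a1 b1] a2] b2]. simpl. intros (h1 & h2 & h3 & h4 & h5 & h6).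
  set (m1 := (a1 + b1) / 2). set (m2 := (a2 + b2) / 2).
  assert (Hm1 : a1 <= m1 <= b1) by (unfold m1; lra).
  assert (Hm2 : a2 <= m2 <= b2) by (unfold m2; lra).
  assert (Hsum : Phi a1 b1 a2 b2 = Phi a1 m1 a2 m2 + Phi m1 b1 a2 m2 + Phi a1 m1 m2 b2 + Phi m1 b1 m2 b2).
  { rewrite (add1 a1 m1 b1 a2 b2) by lra.
    rewrite (add2 a1 m1 a2 m2 b2) by lra. rewrite (add2 m1 b1 a2 m2 b2) by lra. ring. }
  unfold sel; simpl.
  destruct (Rle_dec _ _) as [H1|H1]; [simpl; unfold m1, m2 in *; repeat split; lra|].
  destruct (Rle_dec _ _) as [H2|H2]; [simpl; unfold m1, m2 in *; repeat split; lra|].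
  destruct (Rle_dec _ _) as [H3|H3]; [simpl; unfold m1, m2 in *; repeat split; lra|].
  simpl. repeat split; try (unfold m1, m2 in *; lra).
  apply Rnot_le_lt in H1; apply Rnot_le_lt in H2; apply Rnot_le_lt in H3.
  rewrite Hsum in *.
  pose proof (Rabs_triang (Phi a1 m1 a2 m2 + Phi m1 b1 a2 m2 + Phi a1 m1 m2 b2) (Phi m1 b1 m2 b2)).
  pose proof (Rabs_triang (Phi a1 m1 a2 m2 + Phi m1 b1 a2 m2) (Phi a1 m1 m2 b2)).
  pose proof (Rabs_triang (Phi a1 m1 a2 m2) (Phi m1 b1 a2 m2)).
  simpl in H1, H2, H3 |- *. fold m1 m2 in H1, H2, H3 |- *. lra.
Qed.

Fixpoint P (k : nat) : rect := match k with O => (A1, B1, A2, B2) | S k => sel (P k) end.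

Hypothesis HA1 : A1 <= B1.
Hypothesis HA2 : A2 <= B2.

Lemma P_spec k : inreg (P k) /\ Rabs (PhiR (P 0)) * (/4)^k <= Rabs (PhiR (P k)) /\
  (let '(a1, b1, a2, b2) := P k in b1 - a1 = (B1 - A1) * (/2)^k /\ b2 - a2 = (B2 - A2) * (/2)^k).
Proof.
  induction k as [|k IH].
  - simpl. repeat split; lra.
  - destruct IH as (Hi & Hp & Hs). simpl P.
    destruct (sel_spec _ Hi) as (Hi' & _ & Hp' & Hs').
    split; [exact Hi'|]. split.
    + simpl pow. apply Rle_trans with (Rabs (PhiR (P k)) / 4); [|exact Hp'].
      assert (Hq : forall X Y Z, X * Y <= Z -> X * (/4 * Y) <= Z / 4).
      { intros X Y Z HXY. replace (X * (/4 * Y)) with ((X * Y) / 4) by field. lra. }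
      apply Hq. exact Hp.
    + destruct (P k) as [[[a1 b1] a2] b2]. destruct (sel (a1, b1, a2, b2)) as [[[c1 d1] c2] d2].
      destruct Hs as [Hs1 Hs2]. destruct Hs' as [Hs1' Hs2']. simpl pow.
      split; [rewrite Hs1', Hs1|rewrite Hs2', Hs2]; field.
Qed.

Lemma P_nest k m : (k <= m)%nat -> sub (P m) (P k).
Proof.
  induction 1 as [|m Hkm IH].
  - destruct (P k) as [[[a1 b1] a2] b2]; simpl; lra.
  - simpl P. destruct (P_spec m) as (Hi & _ & _).
    destruct (sel_spec _ Hi) as (_ & Hsub & _).
    destruct (P k) as [[[a1 b1] a2] b2]. destruct (P m) as [[[c1 d1] c2] d2].
    destruct (sel (c1, d1, c2, d2)) as [[[e1 f1] e2] f2]. simpl in *. lra.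
Qed.

Definition fst4 (r : rect) := let '(a1, b1, a2, b2) := r in a1.
Definition snd4 (r : rect) := let '(a1, b1, a2, b2) := r in b1.
Definition thd4 (r : rect) := let '(a1, b1, a2, b2) := r in a2.
Definition fth4 (r : rect) := let '(a1, b1, a2, b2) := r in b2.

Lemma P_ab k m : fst4 (P m) <= snd4 (P k) /\ thd4 (P m) <= fth4 (P k).
Proof.
  destruct (Nat.le_ge_cases k m) as [H|H].
  - pose proof (P_nest k m H) as Hs. destruct (P_spec m) as (Hi & _).
    destruct (P k) as [[[a1 b1] a2] b2]. destruct (P m) as [[[c1 d1] c2] d2]. simpl in *. lra.
  - pose proof (P_nest m k H) as Hs. destruct (P_spec k) as (Hi & _).
    destruct (P k) as [[[a1 b1] a2] b2]. destruct (P m) as [[[c1 d1] c2] d2]. simpl in *. lra.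
Qed.

Theorem goursat_abstract : Phi A1 B1 A2 B2 = 0.
Proof.
  destruct (Req_dec (Phi A1 B1 A2 B2) 0) as [H|Hne]; [exact H|exfalso].
  assert (Hc : 0 < Rabs (Phi A1 B1 A2 B2)) by (apply Rabs_pos_lt; exact Hne).
  set (c := Rabs (Phi A1 B1 A2 B2)) in *.
  destruct (completeness (fun x => exists k, x = fst4 (P k))) as [xs [Hub Hlub]].
  { exists B1. intros x [k ->]. destruct (P_spec k) as (Hi & _). destruct (P k) as [[[a1 b1] a2] b2]. simpl in *. lra. }
  { exists A1. exists O. reflexivity. }
  destruct (completeness (fun x => exists k, x = thd4 (P k))) as [ys [Hub' Hlub']].
  { exists B2. intros x [k ->]. destruct (P_spec k) as (Hi & _). destruct (P k) as [[[a1 b1] a2] b2]. simpl in *. lra. }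
  { exists A2. exists O. reflexivity. }
  assert (Hx : forall k, fst4 (P k) <= xs <= snd4 (P k)).
  { intro k. split. apply Hub. exists k; reflexivity.
    apply Hlub. intros x [m ->]. apply P_ab. }
  assert (Hy : forall k, thd4 (P k) <= ys <= fth4 (P k)).
  { intro k. split. apply Hub'. exists k; reflexivity.
    apply Hlub'. intros x [m ->]. apply P_ab. }
  assert (HxR : A1 <= xs <= B1).
  { specialize (Hx O). simpl in Hx. exact Hx. }
  assert (HyR : A2 <= ys <= B2).
  { specialize (Hy O). simpl in Hy. exact Hy. }
  set (s0 := (B1 - A1) + (B2 - A2)).
  assert (Heps : 0 < c / (2 * (s0 ^ 2 + 1))).
  { apply Rdiv_lt_0_compat; [exact Hc|]. pose proof (pow2_ge_0 s0). lra. }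
  destruct (loc xs ys HxR HyR _ Heps) as [del [Hdel Hloc]].
  destruct (pow_lt_1_zero (/2) ltac:(rewrite Rabs_pos_eq; lra) (del / (s0 + 1)))
    as [N HN].
  { apply Rdiv_lt_0_compat; [exact Hdel|unfold s0; lra]. }
  specialize (HN N (Nat.le_refl N)). rewrite Rabs_pos_eq in HN by (apply pow_le; lra).
  assert (Hh : 0 < (/2) ^ N) by (apply pow_lt; lra).
  destruct (P_spec N) as (Hi & Hp & Hs). specialize (Hx N). specialize (Hy N).
  simpl PhiR in Hp. fold c in Hp.
  assert (H4 : (/4) ^ N = (/2) ^ N * (/2) ^ N).
  { rewrite <- Rpow_mult_distr. f_equal. field. }
  destruct (P N) as [[[a1 b1] a2] b2]. simpl in Hi, Hx, Hy, Hp, Hs.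
  destruct Hs as [Hs1 Hs2]. destruct Hi as (i1 & i2 & i3 & i4 & i5 & i6).
  assert (Hs0 : 0 <= s0) by (unfold s0; lra).
  assert (Hd : s0 * (/2)^N < del).
  { assert (Hdd : del = del / (s0+1) * (s0+1)) by (field; lra). rewrite Hdd. nra. }
  assert (Hw1 : b1 - a1 < del).
  { rewrite Hs1. apply Rle_lt_trans with (s0 * (/2)^N); [|exact Hd].
    apply Rmult_le_compat_r; [lra|unfold s0; lra]. }
  assert (Hw2 : b2 - a2 < del).
  { rewrite Hs2. apply Rle_lt_trans with (s0 * (/2)^N); [|exact Hd].
    apply Rmult_le_compat_r; [lra|unfold s0; lra]. }
  specialize (Hloc a1 b1 a2 b2 i1 (proj1 Hx) (proj2 Hx) i3 i4 (proj1 Hy) (proj2 Hy) i6 Hw1 Hw2).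
  replace ((b1 - a1) + (b2 - a2)) with (s0 * (/2)^N) in Hloc by (rewrite Hs1, Hs2; unfold s0; ring).
  assert (Hfin : c / (2 * (s0 ^ 2 + 1)) * (s0 * (/2)^N) ^ 2 < c * (/4)^N).
  { rewrite H4. replace ((s0 * (/2)^N)^2) with (s0^2 * ((/2)^N * (/2)^N)) by ring.
    assert (0 < (/2)^N * (/2)^N) by (apply Rmult_lt_0_compat; lra).
    set (t := (/2)^N * (/2)^N) in *.
    unfold Rdiv. 
    apply Rmult_lt_reg_r with (2 * (s0^2+1)); [pose proof (pow2_ge_0 s0); lra|].
    replace (c * / (2 * (s0 ^ 2 + 1)) * (s0 ^ 2 * t) * (2 * (s0 ^ 2 + 1))) with (c * (s0^2 * t))
      by (field; pose proof (pow2_ge_0 s0); lra).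
    pose proof (pow2_ge_0 s0).
    apply Rmult_lt_compat_l with (r := c) in H; [|exact Hc].
    nra. }
  lra.
Qed.
End Goursat.

Lemma cont_to_C (f : R -> R) x : continuity_pt f x -> continuous f x.
Proof. intro H. apply continuity_pt_filterlim. exact H. Qed.

Lemma RInt_plus' (f h : R -> R) a b : ex_RInt f a b -> ex_RInt h a b ->
  RInt (fun t => f t + h t) a b = RInt f a b + RInt h a b.
Proof. intros; apply (RInt_plus f h); auto. Qed.

Lemma RInt_minus' (f h : R -> R) a b : ex_RInt f a b -> ex_RInt h a b ->
  RInt (fun t => f t - h t) a b = RInt f a b - RInt h a b.
Proof. intros; apply (RInt_minus f h); auto. Qed.

Lemma ex_RInt_minus' (f h : R -> R) a b : ex_RInt f a b -> ex_RInt h a b ->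
  ex_RInt (fun t => f t - h t) a b.
Proof. intros; apply (ex_RInt_minus f h); auto. Qed.

Lemma RInt_const' a b c : RInt (fun _ => c) a b = (b - a) * c.
Proof. rewrite RInt_const. reflexivity. Qed.

Lemma RInt_Chasles' (f : R -> R) a b c : ex_RInt f a b -> ex_RInt f b c ->
  RInt f a b + RInt f b c = RInt f a c.
Proof. intros; apply (RInt_Chasles f); auto. Qed.

Section Polar.
Variable g : C -> C.
Variable w : C.
Variable R0 : R.
Hypothesis Hd : forall z, Cmod (z - w) < R0 ->
  exists l, is_derive (K:=C_AbsRing) (V:=C_NormedModule) g z l.

Definition U r t := fst (g (pol w r t)).
Definition V r t := snd (g (pol w r t)).

Lemma gcc z : Cmod (z - w) < R0 -> ccont g z.
Proof. intro H. destruct (Hd z H) as [l Hl]. exact (cont_of_deriv g z l Hl). Qed.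

Lemma U_cont r t : Rabs r < R0 -> continuity_pt (U r) t.
Proof.
  intro Hr. apply (comp_cont g (pol w r) t (2 * Rabs r)).
  - pose proof (Rabs_pos r); lra.
  - intro t'. eapply Rle_trans; [apply pol_lip|].
    rewrite Rminus_diag, Rabs_R0. lra.
  - apply gcc. rewrite pol_dist. exact Hr.
Qed.

Lemma V_cont s t : Rabs s < R0 -> continuity_pt (fun s => V s t) s.
Proof.
  intro Hr. apply (comp_cont g (fun s => pol w s t) s 2).
  - lra.
  - intro s'. eapply Rle_trans; [apply pol_lip|].
    rewrite Rminus_diag, Rabs_R0. lra.
  - apply gcc. rewrite pol_dist. exact Hr.
Qed.

Lemma Vd_cont s t : 0 < s < R0 -> continuity_pt (fun s => V s t / s) s.
Proof.
  intro Hs. apply (continuity_pt_div (fun s => V s t) (fun s => s)).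
  - apply V_cont. rewrite Rabs_pos_eq; lra.
  - apply continuity_pt_id.
  - lra.
Qed.

Lemma exU r1 r2 a b : Rabs r1 < R0 -> Rabs r2 < R0 -> ex_RInt (fun t => U r2 t - U r1 t) a b.
Proof.
  intros H1 H2. apply (ex_RInt_continuous (V:=R_CompleteNormedModule)). intros z _.
  apply cont_to_C. apply continuity_pt_minus; apply U_cont; auto.
Qed.

Lemma exV t1 t2 a b : 0 < a -> 0 < b -> a < R0 -> b < R0 ->
  ex_RInt (fun s => V s t2 / s - V s t1 / s) a b.
Proof.
  intros. apply (ex_RInt_continuous (V:=R_CompleteNormedModule)). intros z Hz.
  assert (0 < z < R0).
  { destruct Hz as [Hz1 Hz2]. split.
    - eapply Rlt_le_trans; [|exact Hz1]. apply Rmin_case; lra.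
    - eapply Rle_lt_trans; [exact Hz2|]. apply Rmax_case; lra. }
  apply cont_to_C. apply continuity_pt_minus; apply Vd_cont; auto.
Qed.

Definition Phi r1 r2 t1 t2 :=
  RInt (fun t => U r2 t - U r1 t) t1 t2 - RInt (fun s => V s t2 / s - V s t1 / s) r1 r2.

Section Rect.
Variables p1 p2 T1 T2 : R.
Hypothesis Hp1 : 0 < p1.
Hypothesis Hp12 : p1 <= p2.
Hypothesis Hp2 : p2 < R0.
Hypothesis HT : T1 <= T2.

Lemma add1 : forall a1 m b1 a2 b2, p1 <= a1 -> a1 <= m -> m <= b1 -> b1 <= p2 ->
  T1 <= a2 -> a2 <= b2 -> b2 <= T2 ->
  Phi a1 b1 a2 b2 = Phi a1 m a2 b2 + Phi m b1 a2 b2.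
Proof.
  intros. unfold Phi.
  assert (Ha : forall x, p1 <= x <= p2 -> Rabs x < R0) by (intros x Hx; rewrite Rabs_pos_eq; lra).
  rewrite (RInt_ext (V:=R_CompleteNormedModule) (fun t => U b1 t - U a1 t) (fun t => (U m t - U a1 t) + (U b1 t - U m t)))
    by (intros; simpl; ring).
  rewrite RInt_plus' by (apply exU; apply Ha; lra).
  rewrite <- (RInt_Chasles' _ a1 m b1) by (apply exV; lra).
  ring.
Qed.

Lemma add2 : forall a1 b1 a2 m b2, p1 <= a1 -> a1 <= b1 -> b1 <= p2 ->
  T1 <= a2 -> a2 <= m -> m <= b2 -> b2 <= T2 ->
  Phi a1 b1 a2 b2 = Phi a1 b1 a2 m + Phi a1 b1 m b2.
Proof.
  intros. unfold Phi.
  assert (Ha : forall x, p1 <= x <= p2 -> Rabs x < R0) by (intros x Hx; rewrite Rabs_pos_eq; lra).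
  rewrite (RInt_ext (V:=R_CompleteNormedModule) (fun s => V s b2 / s - V s a2 / s) (fun s => (V s m / s - V s a2 / s) + (V s b2 / s - V s m / s)))
    by (intros; simpl; ring).
  rewrite RInt_plus' by (apply exV; lra).
  rewrite <- (RInt_Chasles' _ a2 m b2) by (apply exU; apply Ha; lra).
  ring.
Qed.


Lemma loc_est : forall x y, p1 <= x <= p2 -> T1 <= y <= T2 ->
  forall eps, 0 < eps -> exists del, 0 < del /\
  forall a1 b1 a2 b2, p1 <= a1 -> a1 <= x -> x <= b1 -> b1 <= p2 ->
    T1 <= a2 -> a2 <= y -> y <= b2 -> b2 <= T2 -> b1 - a1 < del -> b2 - a2 < del ->
    Rabs (Phi a1 b1 a2 b2) <= eps * ((b1 - a1) + (b2 - a2))^2.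
Proof.
  intros x y Hx Hy eps Heps.
  set (zs := pol w x y).
  assert (Hzs : Cmod (zs - w) < R0) by (unfold zs; rewrite pol_dist, Rabs_pos_eq; lra).
  destruct (Hd zs Hzs) as [l Hl].
  set (Kp := 2 + 2 * p2).
  assert (HKp : 0 < Kp) by (unfold Kp; lra).
  set (C1 := 1 + / p1).
  assert (HC1 : 0 < C1) by (unfold C1; pose proof (Rinv_0_lt_compat p1 Hp1); lra).
  set (e' := eps / (2 * Kp * C1)).
  assert (He' : 0 < e') by (unfold e'; apply Rdiv_lt_0_compat; [lra|]; 
    apply Rmult_lt_0_compat; [apply Rmult_lt_0_compat|]; lra).
  destruct (deriv_eps g zs l Hl e' He') as [d' [Hd' Hder]].
  exists (d' / (2 * Kp)). split; [apply Rdiv_lt_0_compat; lra|].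
  intros a1 b1 a2 b2 ha1 hx1 hx2 hb1 ha2 hy1 hy2 hb2 hw1 hw2.
  set (s := (b1 - a1) + (b2 - a2)).
  set (E := fun z => (g z - g zs - l * (z - zs))%C).
  assert (HE : forall r t, a1 <= r <= b1 -> a2 <= t <= b2 -> Cmod (E (pol w r t)) <= e' * Kp * s).
  { intros r t Hr Ht.
    assert (Hdist : Cmod (pol w r t - zs) <= Kp * s).
    { unfold zs. eapply Rle_trans; [apply pol_lip|].
      rewrite (Rabs_pos_eq x) by lra.
      assert (Rabs (r - x) <= b1 - a1) by (apply Rabs_le; lra).
      assert (Rabs (t - y) <= b2 - a2) by (apply Rabs_le; lra).
      assert (x * Rabs (t - y) <= p2 * (b2 - a2)).
      { apply Rmult_le_compat; try lra. apply Rabs_pos. }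
      unfold Kp, s. nra. }
    assert (Hlt : Cmod (pol w r t - zs) < d').
    { eapply Rle_lt_trans; [exact Hdist|].
      assert (s < 2 * (d' / (2 * Kp))) by (unfold s; lra).
      replace d' with (Kp * (2 * (d' / (2 * Kp)))) by (field; lra).
      apply Rmult_lt_compat_l; lra. }
    specialize (Hder _ Hlt). unfold E. eapply Rle_trans; [exact Hder|].
    rewrite Rmult_assoc. apply Rmult_le_compat_l; lra. }
  set (A := (g zs - l * (zs - w))%C).
  assert (Hg : forall z, g z = (A + l * (z - w) + E z)%C) by (intro z; unfold A, E; ring).
  set (LU := fun r t => fst A + r * (fst l * cos t - snd l * sin t)).
  set (LV := fun r t => snd A + r * (fst l * sin t + snd l * cos t)).
  assert (HU : forall r t, U r t = LU r t + fst (E (pol w r t))).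
  { intros r t. unfold U, LU. rewrite (Hg (pol w r t)).
    destruct A as [A1 A2]. destruct l as [l1 l2]. destruct (E (pol w r t)) as [e1 e2].
    unfold pol. destruct w as [w1 w2]. simpl. ring. }
  assert (HV : forall r t, V r t = LV r t + snd (E (pol w r t))).
  { intros r t. unfold V, LV. rewrite (Hg (pol w r t)).
    destruct A as [A1 A2]. destruct l as [l1 l2]. destruct (E (pol w r t)) as [e1 e2].
    unfold pol. destruct w as [w1 w2]. simpl. ring. }
  set (Q := fst l * (sin b2 - sin a2) + snd l * (cos b2 - cos a2)).
  set (LUd := fun t => LU b1 t - LU a1 t).
  set (EUd := fun t => fst (E (pol w b1 t)) - fst (E (pol w a1 t))).
  assert (HLUd : is_RInt LUd a2 b2 ((b1 - a1) * Q)).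
  { assert (H := is_RInt_derive (V:=R_CompleteNormedModule)
      (fun t => (b1 - a1) * (fst l * sin t + snd l * cos t)) LUd a2 b2).
    replace ((b1 - a1) * Q) with (minus ((fun t => (b1 - a1) * (fst l * sin t + snd l * cos t)) b2)
                                      ((fun t => (b1 - a1) * (fst l * sin t + snd l * cos t)) a2))
      by (unfold minus, plus, opp, Q; simpl; ring).
    apply H.
    - intros t _. unfold LUd, LU. auto_derive; auto. ring.
    - intros t _. apply (ex_derive_continuous (K:=R_AbsRing) (V:=R_NormedModule)). unfold LUd, LU. auto_derive. auto. }
  assert (Hab : forall x, p1 <= x <= p2 -> Rabs x < R0) by (intros z Hz; rewrite Rabs_pos_eq; lra).
  assert (HexUd : ex_RInt (fun t => U b1 t - U a1 t) a2 b2) by (apply exU; apply Hab; lra).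
  assert (HexLUd : ex_RInt LUd a2 b2) by (exists ((b1 - a1) * Q); exact HLUd).
  assert (HexEUd : ex_RInt EUd a2 b2).
  { apply (ex_RInt_ext (V:=R_CompleteNormedModule) (fun t => (U b1 t - U a1 t) - LUd t)).
    - intros t _. unfold EUd, LUd. rewrite !HU. simpl; ring.
    - apply ex_RInt_minus'; assumption. }
  assert (HIU : RInt (fun t => U b1 t - U a1 t) a2 b2 = (b1 - a1) * Q + RInt EUd a2 b2).
  { rewrite (RInt_ext (V:=R_CompleteNormedModule) _ (fun t => LUd t + EUd t))
      by (intros t _; unfold EUd, LUd; rewrite !HU; simpl; ring).
    rewrite RInt_plus' by assumption. f_equal. apply is_RInt_unique. exact HLUd. }
  set (LVd := fun s => LV s b2 / s - LV s a2 / s).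
  set (EVd := fun s => snd (E (pol w s b2)) / s - snd (E (pol w s a2)) / s).
  assert (HLVd : forall s, 0 < s -> LVd s = Q).
  { intros s0 Hs0. unfold LVd, LV, Q. field. lra. }
  assert (HexLVd : ex_RInt LVd a1 b1).
  { apply (ex_RInt_ext (V:=R_CompleteNormedModule) (fun _ => Q)).
    - intros s0 Hs0. rewrite HLVd; [reflexivity|]. 
      destruct Hs0 as [Hs0 _]. eapply Rle_lt_trans; [|exact Hs0]. apply Rmin_case; lra.
    - apply ex_RInt_const. }
  assert (HexVd : ex_RInt (fun s => V s b2 / s - V s a2 / s) a1 b1) by (apply exV; lra).
  assert (HexEVd : ex_RInt EVd a1 b1).
  { apply (ex_RInt_ext (V:=R_CompleteNormedModule) (fun s => (V s b2 / s - V s a2 / s) - LVd s)).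
    - intros t Ht. assert (0 < t) by (destruct Ht as [Ht _]; eapply Rle_lt_trans; [|exact Ht]; apply Rmin_case; lra).
      unfold EVd, LVd. rewrite !HV. simpl; field; lra.
    - apply ex_RInt_minus'; assumption. }
  assert (HIV : RInt (fun s => V s b2 / s - V s a2 / s) a1 b1 = (b1 - a1) * Q + RInt EVd a1 b1).
  { rewrite (RInt_ext (V:=R_CompleteNormedModule) _ (fun s => LVd s + EVd s)).
    2:{ intros t Ht. assert (0 < t) by (destruct Ht as [Ht _]; eapply Rle_lt_trans; [|exact Ht]; apply Rmin_case; lra).
        unfold EVd, LVd. rewrite !HV. simpl; field; lra. }
    rewrite RInt_plus' by assumption. f_equal.
    rewrite (RInt_ext (V:=R_CompleteNormedModule) _ (fun _ => Q)).
    2:{ intros t Ht. assert (0 < t) by (destruct Ht as [Ht _]; eapply Rle_lt_trans; [|exact Ht]; apply Rmin_case; lra).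
        apply HLVd; lra. }
    rewrite RInt_const'; try reflexivity. }
  unfold Phi. rewrite HIU, HIV.
  replace ((b1 - a1) * Q + RInt EUd a2 b2 - ((b1 - a1) * Q + RInt EVd a1 b1))
    with (RInt EUd a2 b2 - RInt EVd a1 b1) by ring.
  assert (Hs0 : 0 <= s) by (unfold s; lra).
  assert (BU : Rabs (RInt EUd a2 b2) <= (2 * (e' * Kp * s)) * (b2 - a2)).
  { apply RInt_abs_bound; [lra|assumption|]. intros t Ht. unfold EUd.
    unfold Rminus. eapply Rle_trans; [apply Rabs_triang|]. rewrite Rabs_Ropp.
    pose proof (HE b1 t ltac:(lra) Ht). pose proof (HE a1 t ltac:(lra) Ht).
    pose proof (fst_le_Cmod (E (pol w b1 t))). pose proof (fst_le_Cmod (E (pol w a1 t))).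
    lra. }
  assert (BV : Rabs (RInt EVd a1 b1) <= (2 * (e' * Kp * s) * / p1) * (b1 - a1)).
  { apply RInt_abs_bound; [lra|assumption|]. intros t Ht. unfold EVd.
    replace (snd (E (pol w t b2)) / t - snd (E (pol w t a2)) / t)
      with ((snd (E (pol w t b2)) - snd (E (pol w t a2))) * / t) by (field; lra).
    rewrite Rabs_mult, (Rabs_pos_eq (/ t)) by (apply Rlt_le, Rinv_0_lt_compat; lra).
    apply Rmult_le_compat.
    - apply Rabs_pos.
    - apply Rlt_le, Rinv_0_lt_compat; lra.
    - unfold Rminus. eapply Rle_trans; [apply Rabs_triang|]. rewrite Rabs_Ropp.
      pose proof (HE t b2 Ht ltac:(lra)). pose proof (HE t a2 Ht ltac:(lra)).
      pose proof (snd_le_Cmod (E (pol w t b2))). pose proof (snd_le_Cmod (E (pol w t a2))).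
      lra.
    - apply Rinv_le_contravar; lra. }
  assert (Heq : eps = 2 * e' * Kp * C1) by (unfold e'; field; lra).
  set (M := 2 * (e' * Kp * s)) in *.
  assert (HM : 0 <= M) by (unfold M; apply Rmult_le_pos; [lra|]; apply Rmult_le_pos; [apply Rmult_le_pos|]; lra).
  assert (Hip : 0 < / p1) by (apply Rinv_0_lt_compat; lra).
  assert (X1 : M * (b2 - a2) <= M * s) by (apply Rmult_le_compat_l; unfold s; lra).
  assert (X2 : M * / p1 * (b1 - a1) <= M * / p1 * s).
  { apply Rmult_le_compat_l; [apply Rmult_le_pos; lra|unfold s; lra]. }
  assert (X3 : M * s + M * / p1 * s = eps * s ^ 2) by (rewrite Heq; unfold M, C1; ring).
  unfold Rminus. eapply Rle_trans; [apply Rabs_triang|]. rewrite Rabs_Ropp.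
  fold s. lra.
Qed.

End Rect.

Lemma Phi_zero p1 p2 T1 T2 : 0 < p1 -> p1 <= p2 -> p2 < R0 -> T1 <= T2 -> Phi p1 p2 T1 T2 = 0.
Proof.
  intros H1 H2 H3 H4.
  apply (goursat_abstract p1 p2 T1 T2 Phi).
  - apply add1; auto.
  - apply add2; auto.
  - apply loc_est; auto.
  - exact H2.
  - exact H4.
Qed.

Lemma pol_2PI s : pol w s (2 * PI) = pol w s 0.
Proof. unfold pol. rewrite cos_2PI, sin_2PI, cos_0, sin_0. reflexivity. Qed.

Lemma exU1 r a b : Rabs r < R0 -> ex_RInt (U r) a b.
Proof.
  intros H1. apply (ex_RInt_continuous (V:=R_CompleteNormedModule)). intros z _.
  apply cont_to_C. apply U_cont; auto.
Qed.

Lemma circle_const r r' : 0 < r' -> r' <= r -> r < R0 ->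
  RInt (U r) 0 (2 * PI) = RInt (U r') 0 (2 * PI).
Proof.
  intros H1 H2 H3.
  assert (HPI : 0 <= 2 * PI) by (pose proof PI_RGT_0; lra).
  pose proof (Phi_zero r' r 0 (2 * PI) H1 H2 H3 HPI) as H. unfold Phi in H.
  rewrite (RInt_ext (V:=R_CompleteNormedModule) (fun s => V s (2 * PI) / s - V s 0 / s) (fun _ => 0)) in H.
  2:{ intros t _. unfold V. rewrite pol_2PI. simpl. ring. }
  rewrite RInt_const' in H.
  rewrite RInt_minus' in H by (apply exU1; rewrite Rabs_pos_eq; lra).
  lra.
Qed.

Lemma zero_of_small (x K : R) : 0 < K -> (forall eps, 0 < eps -> Rabs x <= eps * K) -> x = 0.
Proof.
  intros HK H. destruct (Req_dec x 0) as [|Hx]; [assumption|exfalso].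
  assert (Hp : 0 < Rabs x) by (apply Rabs_pos_lt; exact Hx).
  specialize (H (Rabs x / (2 * K)) ltac:(apply Rdiv_lt_0_compat; lra)).
  replace (Rabs x / (2 * K) * K) with (Rabs x / 2) in H by (field; lra). lra.
Qed.

Lemma mean_value r : 0 < r < R0 -> RInt (U r) 0 (2 * PI) = 2 * PI * fst (g w).
Proof.
  intros Hr.
  assert (HPI : 0 < 2 * PI) by (pose proof PI_RGT_0; lra).
  apply Rminus_diag_uniq. apply (zero_of_small _ (2 * PI) HPI).
  intros eps Heps.
  assert (Hw : Cmod (w - w) < R0) by (replace (w - w)%C with (RtoC 0) by ring; rewrite Cmod_0; lra).
  destruct (gcc w Hw eps Heps) as [d [Hd0 Hc]].
  set (r' := Rmin r (d / 2)).
  assert (Hr' : 0 < r' <= r) by (unfold r'; split; [apply Rmin_pos; lra|apply Rmin_l]).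
  assert (Hr'd : r' < d) by (unfold r'; eapply Rle_lt_trans; [apply Rmin_r|lra]).
  rewrite (circle_const r r') by lra.
  replace (2 * PI * fst (g w)) with (RInt (fun _ => fst (g w)) 0 (2 * PI))
    by (rewrite RInt_const'; simpl; ring).
  rewrite <- RInt_minus'.
  2:{ apply exU1. rewrite Rabs_pos_eq; lra. }
  2:{ apply ex_RInt_const. }
  assert (HB : Rabs (RInt (fun t => U r' t - fst (g w)) 0 (2 * PI)) <= eps * (2 * PI - 0)).
  { apply RInt_abs_bound; [lra| |].
  - apply ex_RInt_minus'; [apply exU1; rewrite Rabs_pos_eq; lra|apply ex_RInt_const].
  - intros t _. unfold U. rewrite <- fst_minus. 
    eapply Rle_trans; [apply fst_le_Cmod|]. apply Rlt_le. apply Hc.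
    rewrite pol_dist, Rabs_pos_eq; lra. }
  rewrite Rminus_0_r in HB. exact HB.
Qed.

End Polar.

Lemma conv (f: C -> C) z l : is_derive (K:=C_AbsRing) (V:=AbsRing_NormedModule C_AbsRing) f z l -> is_derive (K:=C_AbsRing) (V:=C_NormedModule) f z l.
Proof.
  intros [_ H]. apply eps_deriv. intros eps Heps.
  specialize (H z (fun P H => H) (mkposreal eps Heps)).
  destruct (locally_norm_le_locally (V:=AbsRing_NormedModule C_AbsRing) z _ H) as [d Hd].
  exists d; split; [apply cond_pos|].
  intros z' Hz'. specialize (Hd z' Hz'). simpl in Hd.
  unfold minus, plus, opp, scal in Hd; simpl in Hd.
  unfold mult in Hd; simpl in Hd. unfold abs in Hd; simpl in Hd.
  replace (f z' - f z - l * (z' - z))%C with (f z' + - f z + - ((z' + - z) * l))%C by ring.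
  exact Hd.
Qed.

Lemma conv' (f: C -> C) z l : is_derive (K:=C_AbsRing) (V:=C_NormedModule) f z l -> is_derive (K:=C_AbsRing) (V:=AbsRing_NormedModule C_AbsRing) f z l.
Proof.
  intros H0. pose proof (deriv_eps f z l H0) as H. split; [apply is_linear_scal_l|].
  intros x Hx. apply (is_filter_lim_locally_unique (K:=C_AbsRing) (V:=AbsRing_NormedModule C_AbsRing)) in Hx. subst x.
  intros eps. destruct (H eps (cond_pos eps)) as [d [Hd H']].
  apply (locally_le_locally_norm (V:=AbsRing_NormedModule C_AbsRing) z).
  exists (mkposreal d Hd). intros z' Hz'. unfold ball_norm in Hz'. simpl in Hz'.
  specialize (H' z' Hz').
  unfold minus, plus, opp, scal; simpl. unfold mult, abs; simpl.
  replace (f z' + - f z + - ((z' + - z) * l))%C with (f z' - f z - l * (z' - z))%C by ring.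
  exact H'.
Qed.

Definition Cd (f : C -> C) (z : C) := ex_derive (K:=C_AbsRing) (V:=C_NormedModule) f z.

Lemma Cd_const c z : Cd (fun _ => c) z.
Proof. exists zero. apply (is_derive_const (K:=C_AbsRing) (V:=C_NormedModule)). Qed.

Lemma Cd_id z : Cd (fun u => u) z.
Proof. exists one. apply conv. apply (is_derive_id (K:=C_AbsRing)). Qed.

Lemma Cd_plus f g z : Cd f z -> Cd g z -> Cd (fun u => f u + g u)%C z.
Proof.
  intros [a Ha] [b Hb]. exists (plus a b).
  exact (is_derive_plus (K:=C_AbsRing) (V:=C_NormedModule) f g z a b Ha Hb).
Qed.

Lemma Cd_minus f g z : Cd f z -> Cd g z -> Cd (fun u => f u - g u)%C z.
Proof.
  intros [a Ha] [b Hb]. exists (minus a b).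
  exact (is_derive_minus (K:=C_AbsRing) (V:=C_NormedModule) f g z a b Ha Hb).
Qed.

Lemma Cd_mult f g z : Cd f z -> Cd g z -> Cd (fun u => f u * g u)%C z.
Proof.
  intros [a Ha] [b Hb]. eexists. apply conv.
  exact (is_derive_mult (K:=C_AbsRing) f g z a b (conv' _ _ _ Ha) (conv' _ _ _ Hb) Cmult_comm).
Qed.

Lemma Cd_comp f g z : Cd f (g z) -> Cd g z -> Cd (fun u => f (g u)) z.
Proof.
  intros [a Ha] [b Hb]. eexists.
  exact (is_derive_comp (K:=C_AbsRing) (V:=C_NormedModule) f g z a b Ha (conv' _ _ _ Hb)).
Qed.

Lemma is_derive_Cinv z : z <> RtoC 0 ->
  is_derive (K:=C_AbsRing) (V:=C_NormedModule) Cinv z (- / (z * z))%C.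
Proof.
  intro Hz. apply eps_deriv. intros eps Heps.
  assert (Hm : 0 < Cmod z) by (apply Cmod_gt_0; exact Hz).
  exists (Rmin (Cmod z / 2) (eps * Cmod z ^ 3 / 2)). split.
  { apply Rmin_pos; [lra|]. apply Rdiv_lt_0_compat; [|lra]. apply Rmult_lt_0_compat; [lra|]. apply pow_lt; lra. }
  intros z' Hz'.
  assert (H1 : Cmod (z' - z) < Cmod z / 2) by (eapply Rlt_le_trans; [exact Hz'|apply Rmin_l]).
  assert (H2 : Cmod (z' - z) < eps * Cmod z ^ 3 / 2) by (eapply Rlt_le_trans; [exact Hz'|apply Rmin_r]).
  assert (Hz'm : Cmod z / 2 < Cmod z').
  { assert (Hzz : z = (z - z' + z')%C) by ring.
    pose proof (Cmod_triangle (z - z') z'). rewrite <- Hzz in H.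
    replace (z - z')%C with (- (z' - z))%C in H by ring. rewrite Cmod_opp in H. lra. }
  assert (Hz'0 : z' <> RtoC 0) by (apply Cmod_gt_0; lra).
  replace (/ z' - / z - - / (z * z) * (z' - z))%C with ((z' - z) * (z' - z) / (z' * z * z))%C
    by (field; split; [exact Hz|exact Hz'0]).
  rewrite Cmod_div by (apply Cmult_neq_0; [apply Cmult_neq_0|]; assumption).
  rewrite !Cmod_mult.
  pose proof (Cmod_ge_0 (z' - z)).
  apply Rmult_le_reg_r with (Cmod z' * Cmod z * Cmod z).
  { apply Rmult_lt_0_compat; [apply Rmult_lt_0_compat|]; lra. }
  unfold Rdiv. rewrite Rmult_assoc, Rinv_l by (apply Rgt_not_eq; apply Rmult_lt_0_compat; [apply Rmult_lt_0_compat|]; lra).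
  rewrite Rmult_1_r.
  assert (Cmod (z' - z) <= eps * (Cmod z' * Cmod z * Cmod z)).
  { apply Rle_trans with (eps * Cmod z ^ 3 / 2); [lra|].
    unfold Rdiv. simpl. 
    assert (Cmod z * (Cmod z * (Cmod z * 1)) * / 2 <= Cmod z' * Cmod z * Cmod z) by nra.
    nra. }
  nra.
Qed.

Lemma Cd_inv f z : Cd f z -> f z <> RtoC 0 -> Cd (fun u => / f u)%C z.
Proof.
  intros [a Ha] Hz. eexists.
  exact (is_derive_comp (K:=C_AbsRing) (V:=C_NormedModule) Cinv f z _ a (is_derive_Cinv _ Hz) (conv' _ _ _ Ha)).
Qed.

Lemma Cd_div f g z : Cd f z -> Cd g z -> g z <> RtoC 0 -> Cd (fun u => f u / g u)%C z.
Proof.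
  intros Hf Hg Hz. apply (Cd_mult f (fun u => / g u)%C); auto. apply Cd_inv; auto.
Qed.

Lemma RInt_le_const (f : R -> R) a b M : a <= b -> ex_RInt f a b ->
  (forall t, a <= t <= b -> f t <= M) -> RInt f a b <= M * (b - a).
Proof.
  intros Hab Hex H. rewrite <- (Rmult_comm (b - a)). rewrite <- RInt_const'.
  apply RInt_le; auto. apply ex_RInt_const. intros t Ht; apply H; lra.
Qed.

Lemma exR_sub (f : R -> R) a b c d : a <= c -> c <= d -> d <= b ->
  (forall t, a <= t <= b -> continuity_pt f t) -> ex_RInt f c d.
Proof.
  intros H1 H2 H3 Hc. apply (ex_RInt_continuous (V:=R_CompleteNormedModule)).
  intros z Hz. apply cont_to_C. apply Hc.
  rewrite Rmin_left in Hz by lra. rewrite Rmax_right in Hz by lra. lra.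
Qed.

Lemma RInt_lt_max (f : R -> R) a b t0 M : a < t0 < b ->
  (forall t, a <= t <= b -> continuity_pt f t) ->
  (forall t, a <= t <= b -> f t <= M) -> f t0 < M -> RInt f a b < M * (b - a).
Proof.
  intros Ht0 Hc Hle Hlt.
  set (eta := (M - f t0) / 2).
  assert (Heta : 0 < eta) by (unfold eta; lra).
  destruct (Hc t0 ltac:(lra) eta Heta) as [d [Hd Hd']].
  set (d' := Rmin (d / 2) (Rmin ((t0 - a) / 2) ((b - t0) / 2))).
  assert (Hd'0 : 0 < d') by (unfold d'; repeat apply Rmin_pos; lra).
  assert (Hd'1 : d' <= d / 2) by (unfold d'; apply Rmin_l).
  assert (Hd'2 : d' <= (t0 - a) / 2) by (unfold d'; eapply Rle_trans; [apply Rmin_r|apply Rmin_l]).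
  assert (Hd'3 : d' <= (b - t0) / 2) by (unfold d'; eapply Rle_trans; [apply Rmin_r|apply Rmin_r]).
  set (c1 := t0 - d'). set (c2 := t0 + d').
  rewrite <- (RInt_Chasles' f a c1 b) by (apply (exR_sub f a b); unfold c1; try lra; auto).
  rewrite <- (RInt_Chasles' f c1 c2 b) by (apply (exR_sub f a b); unfold c1, c2; try lra; auto).
  assert (I1 : RInt f a c1 <= M * (c1 - a)).
  { apply RInt_le_const; [unfold c1; lra|apply (exR_sub f a b); unfold c1; try lra; auto|].
    intros t Ht; apply Hle; unfold c1 in Ht; lra. }
  assert (I3 : RInt f c2 b <= M * (b - c2)).
  { apply RInt_le_const; [unfold c2; lra|apply (exR_sub f a b); unfold c2; try lra; auto|].
    intros t Ht; apply Hle; unfold c2 in Ht; lra. }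
  assert (I2 : RInt f c1 c2 <= (M - eta) * (c2 - c1)).
  { apply RInt_le_const; [unfold c1, c2; lra|apply (exR_sub f a b); unfold c1, c2; try lra; auto|].
    intros t Ht. 
    destruct (Req_dec t t0) as [->|Hne]; [unfold eta; lra|].
    assert (Hdist : R_dist t t0 < d).
    { unfold R_dist. apply Rabs_def1; unfold c1, c2 in Ht; lra. }
    specialize (Hd' t (conj (conj I (not_eq_sym Hne)) Hdist)). simpl in Hd'. unfold R_dist in Hd'.
    apply Rabs_def2 in Hd'. unfold eta in *. lra. }
  assert (c2 - c1 > 0) by (unfold c1, c2; lra).
  nra.
Qed.

Lemma LL (F : C -> C) (x r : R) :
  (forall z, Cmod z < 1 -> exists l, is_derive (K:=C_AbsRing) (V:=C_NormedModule) F z l) ->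
  (forall z, Cmod z < 1 -> fst (F z) <= 1) ->
  0 < x < 1 -> fst (F (RtoC x)) = 1 -> 0 < r < 1 - x -> fst (F (RtoC (x - r))) = 1.
Proof.
  intros Hd Hle Hx Hfx Hr.
  set (w := RtoC x).
  assert (Hin : forall z, Cmod (z - w) < 1 - x -> Cmod z < 1).
  { intros z Hz. assert (Hzw : z = ((z - w) + w)%C) by ring. rewrite Hzw at 1.
    eapply Rle_lt_trans; [apply Cmod_triangle|]. unfold w in *. rewrite Cmod_R, Rabs_pos_eq; lra. }
  assert (Hd' : forall z, Cmod (z - w) < 1 - x -> exists l, is_derive (K:=C_AbsRing) (V:=C_NormedModule) F z l)
    by (intros z Hz; apply Hd; apply Hin; exact Hz).
  pose proof (mean_value F w (1 - x) Hd' r Hr) as HMV.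
  replace (fst (F w)) with 1 in HMV by (symmetry; exact Hfx).
  assert (HPI : pol w r PI = RtoC (x - r)).
  { unfold pol, w, RtoC. simpl. rewrite cos_PI, sin_PI. f_equal; ring. }
  destruct (Req_dec (fst (F (RtoC (x - r)))) 1) as [E|NE]; [exact E|exfalso].
  assert (Hlt : fst (F (RtoC (x - r))) < 1).
  { assert (Cmod (RtoC (x - r)) < 1) by (rewrite Cmod_R; apply Rabs_def1; lra).
    pose proof (Hle _ H). lra. }
  assert (HPI0 : 0 < PI < 2 * PI) by (pose proof PI_RGT_0; lra).
  assert (Hlt2 : RInt (U F w r) 0 (2 * PI) < 1 * (2 * PI - 0)).
  { apply RInt_lt_max with PI; [exact HPI0| | |].
    - intros t _. apply (U_cont F w (1 - x) Hd'). rewrite Rabs_pos_eq; lra.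
    - intros t _. unfold U. apply Hle. apply Hin. rewrite pol_dist, Rabs_pos_eq; lra.
    - unfold U. rewrite HPI. exact Hlt. }
  lra.
Qed.

Section Chain.
Variable F : C -> C.
Hypothesis HdF : forall z, Cmod z < 1 -> exists l, is_derive (K:=C_AbsRing) (V:=C_NormedModule) F z l.
Hypothesis HleF : forall z, Cmod z < 1 -> fst (F z) <= 1.

Lemma chain0 x : 0 < x < 1/2 -> fst (F (RtoC x)) = 1 -> fst (F (RtoC 0)) = 1.
Proof.
  intros Hx H. pose proof (LL F x x HdF HleF ltac:(lra) H ltac:(lra)) as H'.
  replace (x - x) with 0 in H' by ring. exact H'.
Qed.

Lemma chain k : forall x, 0 < x < 1 -> fst (F (RtoC x)) = 1 -> (1 - x) * (3/2)^k > 1/2 ->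
  fst (F (RtoC 0)) = 1.
Proof.
  induction k as [|k IH]; intros x Hx H Hk.
  - simpl in Hk. apply (chain0 x); [lra|exact H].
  - destruct (Rlt_le_dec x (1/2)) as [Hlt|Hge]; [apply (chain0 x); [lra|exact H]|].
    pose proof (LL F x ((1 - x) / 2) HdF HleF Hx H ltac:(lra)) as H'.
    apply (IH (x - (1 - x) / 2)); [lra|exact H'|].
    replace (1 - (x - (1 - x) / 2)) with ((1 - x) * (3/2)) by field.
    simpl pow in Hk. lra.
Qed.
End Chain.

Lemma pow_big (a : R) : 0 < a -> exists k, a * (3/2)^k > 1/2.
Proof.
  intro Ha. destruct (pow_lt_1_zero (2/3) ltac:(rewrite Rabs_pos_eq; lra) (2 * a) ltac:(lra)) as [N HN].
  exists N. specialize (HN N (Nat.le_refl N)). rewrite Rabs_pos_eq in HN by (apply pow_le; lra).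
  assert (Hm : (2/3)^N * (3/2)^N = 1) by (rewrite <- Rpow_mult_distr; replace (2/3 * (3/2)) with 1 by field; apply pow1).
  assert (0 < (3/2)^N) by (apply pow_lt; lra).
  nra.
Qed.

Theorem schwarz_strict (f : C -> C) :
  (forall z, Cmod z < 1 -> Cd f z) ->
  (forall z, Cmod z < 1 -> Cmod (f z) <= 1) ->
  f (RtoC 0) = RtoC 0 ->
  forall z, Cmod z < 1 -> Cmod (f z) < 1.
Proof.
  intros Hd Hb H0 z Hz.
  destruct (Rlt_le_dec (Cmod (f z)) 1) as [|Hge]; [assumption|exfalso].
  assert (Hc1 : Cmod (f z) = 1) by (pose proof (Hb z Hz); lra).
  assert (Hz0 : z <> RtoC 0).
  { intro E. rewrite E, H0, Cmod_0 in Hc1. lra. }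
  set (rho := Cmod z).
  assert (Hrho : 0 < rho < 1) by (split; [apply Cmod_gt_0; exact Hz0|exact Hz]).
  assert (Hrho0 : RtoC rho <> RtoC 0) by (intro E; injection E; lra).
  set (e := (z / RtoC rho)%C).
  assert (He : Cmod e = 1).
  { unfold e. rewrite Cmod_div by exact Hrho0. rewrite Cmod_R, Rabs_pos_eq by lra. change (Cmod z) with rho. field. lra. }
  set (c := f z).
  set (F := fun u => (Cconj c * f (e * u))%C).
  assert (HdF : forall u, Cmod u < 1 -> exists l, is_derive (K:=C_AbsRing) (V:=C_NormedModule) F u l).
  { intros u Hu. apply (Cd_mult (fun _ => Cconj c) (fun u => f (e * u)%C)).
    - apply Cd_const.
    - apply (Cd_comp f (fun u => (e * u)%C)).
      + apply Hd. rewrite Cmod_mult, He. lra.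
      + apply (Cd_mult (fun _ => e) (fun u => u)); [apply Cd_const|apply Cd_id]. }
  assert (HleF : forall u, Cmod u < 1 -> fst (F u) <= 1).
  { intros u Hu. eapply Rle_trans; [apply Rle_abs|]. eapply Rle_trans; [apply fst_le_Cmod|].
    unfold F. rewrite Cmod_mult, Cmod_conj. unfold c. rewrite Hc1, Rmult_1_l. apply Hb.
    rewrite Cmod_mult, He. lra. }
  assert (HFrho : fst (F (RtoC rho)) = 1).
  { unfold F. replace (e * RtoC rho)%C with z by (unfold e; field; exact Hrho0).
    fold c. replace (Cconj c * c)%C with (c * Cconj c)%C by ring. rewrite <- Cmod2_conj.
    fold c in Hc1. rewrite Hc1. simpl. ring. }
  assert (HF0 : fst (F (RtoC 0)) = 0).
  { unfold F. replace (e * RtoC 0)%C with (RtoC 0) by ring. rewrite H0.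
    destruct c; simpl; ring. }
  destruct (pow_big (1 - rho) ltac:(lra)) as [k Hk].
  pose proof (chain F HdF HleF k rho Hrho HFrho Hk). lra.
Qed.

Lemma Cmod2 (x : C) : Cmod x ^ 2 = fst x ^ 2 + snd x ^ 2.
Proof. apply Cmod2_alt. Qed.

Lemma Cmod_sym (a b : C) : Cmod (a - b) = Cmod (b - a).
Proof. replace (a - b)%C with (- (b - a))%C by ring. apply Cmod_opp. Qed.

Lemma lt_of_sq (a b : R) : 0 <= a -> 0 <= b -> a ^ 2 < b ^ 2 -> a < b.
Proof. intros. nra. Qed.

Lemma le_of_sq (a b : R) : 0 <= a -> 0 <= b -> a ^ 2 <= b ^ 2 -> a <= b.
Proof. intros. nra. Qed.

Lemma le_eps (x a K : R) : 0 < K -> (forall eps, 0 < eps -> x < a + K * eps) -> x <= a.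
Proof.
  intros HK H. destruct (Rle_lt_dec x a) as [|Hlt]; [assumption|exfalso].
  specialize (H ((x - a) / (2 * K)) ltac:(apply Rdiv_lt_0_compat; lra)).
  replace (K * ((x - a) / (2 * K))) with ((x - a) / 2) in H by (field; lra). lra.
Qed.

Lemma ident1 (c : R) (q Y1 Y2 om : C) : Cmod om = 1 ->
  Cmod (RtoC c - Y2 * om)%C ^ 2 - Cmod (RtoC c * q * om - Y1)%C ^ 2 =
  c ^ 2 * (1 - Cmod q ^ 2) + Cmod Y2 ^ 2 - Cmod Y1 ^ 2 - 2 * c * fst (om * (Y2 - Cconj Y1 * q))%C.
Proof.
  intro Hom. assert (Hom2 : Cmod om ^ 2 = 1) by (rewrite Hom; ring).
  rewrite Cmod2 in Hom2. rewrite !Cmod2.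
  destruct om as [o1 o2], q as [q1 q2], Y1 as [a1 a2], Y2 as [b1 b2].
  assert (Hom3 : o1 ^ 2 + o2 ^ 2 = 1) by (simpl in Hom2; simpl; lra). simpl.
  apply Rminus_diag_uniq.
  transitivity ((o1 ^ 2 + o2 ^ 2 - 1) * (b1 ^ 2 + b2 ^ 2 - c ^ 2 * (q1 ^ 2 + q2 ^ 2))); [ring|].
  rewrite Hom3. ring.
Qed.

Lemma ident2 (B1 B2 q : C) :
  ((B2 + Cconj B1 * q) - Cconj (B1 + Cconj B2 * q) * q)%C = (B2 * RtoC (1 - Cmod q ^ 2))%C /\
  Cmod (B1 + Cconj B2 * q)%C ^ 2 - Cmod (B2 + Cconj B1 * q)%C ^ 2 = (Cmod B1 ^ 2 - Cmod B2 ^ 2) * (1 - Cmod q ^ 2).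
Proof.
  rewrite !Cmod2. destruct B1 as [a1 a2], B2 as [b1 b2], q as [q1 q2]. unfold RtoC. simpl. split.
  - apply injective_projections; simpl; ring.
  - ring.
Qed.

Lemma fst_scal_R (z : C) (d : R) : fst (z * RtoC d)%C = d * fst z.
Proof. destruct z; simpl; ring. Qed.

Lemma omega_ineq_G (c : R) (B1 B2 q om : C) :
  Cmod q < 1 -> Cmod B1 + Cmod B2 < c -> Cmod om = 1 ->
  Cmod (RtoC c * q * om - (B1 + Cconj B2 * q))%C <= Cmod (RtoC c - (B2 + Cconj B1 * q) * om)%C.
Proof.
  intros Hq HB Hom.
  apply le_of_sq; try apply Cmod_ge_0.
  pose proof (ident1 c q (B1 + Cconj B2 * q)%C (B2 + Cconj B1 * q)%C om Hom) as E1.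
  destruct (ident2 B1 B2 q) as [E2 E3].
  rewrite E2 in E1.
  set (D := 1 - Cmod q ^ 2) in *.
  assert (HD : 0 < D) by (unfold D; pose proof (Cmod_ge_0 q); nra).
  replace (om * (B2 * RtoC D))%C with ((om * B2) * RtoC D)%C in E1 by ring.
  rewrite fst_scal_R in E1.
  assert (Hre : fst (om * B2)%C <= Cmod B2).
  { eapply Rle_trans; [apply Rle_abs|]. eapply Rle_trans; [apply fst_le_Cmod|].
    rewrite Cmod_mult, Hom. lra. }
  pose proof (Cmod_ge_0 B1). pose proof (Cmod_ge_0 B2).
  assert (Hc : 0 < c) by lra.
  assert (H1 : Cmod B1 ^ 2 < (c - Cmod B2) ^ 2) by nra.
  assert (Hfin : 0 <= c ^ 2 * D + Cmod (B2 + Cconj B1 * q) ^ 2 - Cmod (B1 + Cconj B2 * q) ^ 2 -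
           2 * c * (D * fst (om * B2)%C)).
  { replace (c ^ 2 * D + Cmod (B2 + Cconj B1 * q) ^ 2 - Cmod (B1 + Cconj B2 * q) ^ 2 -
           2 * c * (D * fst (om * B2)%C)) with
      (D * (c ^ 2 - (Cmod B1 ^ 2 - Cmod B2 ^ 2) - 2 * c * fst (om * B2)%C)) by nra.
    apply Rmult_le_pos; [lra|]. nra. }
  lra.
Qed.

Lemma binom_sym' n j : (j <= n)%nat -> binom n (n - j) = binom n j.
Proof. intro H. unfold binom. symmetry. apply pascal_step1. exact H. Qed.

Lemma binom_pos n j : 0 < binom n j.
Proof.
  unfold binom, Binomial.C. apply Rdiv_lt_0_compat; [apply INR_fact_lt_0|].
  apply Rmult_lt_0_compat; apply INR_fact_lt_0.
Qed.

Lemma G_props n y q j : tG n y q -> (1 <= j <= n - 1)%nat ->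
  exists B1 B2, y j = (B1 + Cconj B2 * q)%C /\ y (n - j)%nat = (B2 + Cconj B1 * q)%C /\
    Cmod B1 + Cmod B2 < binom n j /\ Cmod q < 1.
Proof.
  intros [Hq [beta Hb]] Hj. exists (beta j), (beta (n - j)%nat).
  destruct (Hb j Hj) as [E1 L1].
  assert (Hj' : (1 <= n - j <= n - 1)%nat) by lia.
  destruct (Hb (n - j)%nat Hj') as [E2 _].
  replace (n - (n - j))%nat with j in E2 by lia.
  repeat split; auto.
Qed.

Lemma Cmod_tri3 (a b : C) : Cmod a <= Cmod b + Cmod (a - b).
Proof. replace a with (b + (a - b))%C at 1 by ring. apply Cmod_triangle. Qed.

Lemma clos_q n y q : tGamma n y q -> Cmod q <= 1.
Proof.
  intro H. apply (le_eps _ _ 1 Rlt_0_1). intros eps Heps.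
  destruct (H eps Heps) as [y' [q' [[Hq' _] [_ Hqq]]]]. unfold inD in Hq'.
  pose proof (Cmod_tri3 q q'). rewrite Cmod_sym in Hqq. lra.
Qed.

Lemma clos_y n y q k : tGamma n y q -> (1 <= k <= n - 1)%nat -> Cmod (y k) <= binom n k.
Proof.
  intros H Hk. apply (le_eps _ _ 1 Rlt_0_1). intros eps Heps.
  destruct (H eps Heps) as [y' [q' [HG [Hyy _]]]].
  destruct (G_props n y' q' k HG Hk) as [B1 [B2 [E1 [_ [HB Hq']]]]].
  specialize (Hyy k Hk). rewrite Cmod_sym in Hyy.
  pose proof (Cmod_tri3 (y k) (y' k)).
  assert (Cmod (y' k) <= Cmod B1 + Cmod B2).
  { rewrite E1. eapply Rle_trans; [apply Cmod_triangle|]. rewrite Cmod_mult, Cmod_conj.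
    pose proof (Cmod_ge_0 B2). pose proof (Cmod_ge_0 q'). nra. }
  lra.
Qed.

Lemma clos_om n y q j om : tGamma n y q -> (1 <= j <= n - 1)%nat -> Cmod om = 1 ->
  Cmod (RtoC (binom n j) * q * om - y j)%C <= Cmod (RtoC (binom n j) - y (n - j)%nat * om)%C.
Proof.
  intros H Hj Hom. set (c := binom n j).
  assert (Hc : 0 < c) by apply binom_pos.
  apply (le_eps _ _ (c + 2) ltac:(lra)). intros eps Heps.
  destruct (H eps Heps) as [y' [q' [HG [Hyy Hqq]]]].
  destruct (G_props n y' q' j HG Hj) as [B1 [B2 [E1 [E2 [HB Hq']]]]].
  pose proof (omega_ineq_G c B1 B2 q' om Hq' HB Hom) as Hin.
  rewrite <- E1, <- E2 in Hin.
  assert (Hj' : (1 <= n - j <= n - 1)%nat) by lia.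
  pose proof (Hyy j Hj) as Hy1. pose proof (Hyy (n - j)%nat Hj') as Hy2.
  pose proof (Cmod_tri3 (RtoC c * q * om - y j)%C (RtoC c * q' * om - y' j)%C) as T1.
  replace ((RtoC c * q * om - y j) - (RtoC c * q' * om - y' j))%C
    with (RtoC c * om * (q - q') + (y' j - y j))%C in T1 by ring.
  assert (T2 : Cmod (RtoC c * om * (q - q') + (y' j - y j))%C <= c * eps + eps).
  { eapply Rle_trans; [apply Cmod_triangle|]. rewrite !Cmod_mult, Hom, Cmod_R, Rabs_pos_eq by lra.
    rewrite Cmod_sym in Hqq. nra. }
  pose proof (Cmod_tri3 (RtoC c - y' (n - j)%nat * om)%C (RtoC c - y (n - j)%nat * om)%C) as T3.
  replace ((RtoC c - y' (n - j)%nat * om) - (RtoC c - y (n - j)%nat * om))%C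
    with ((y (n - j)%nat - y' (n - j)%nat) * om)%C in T3 by ring.
  rewrite Cmod_mult, Hom, Rmult_1_r, (Cmod_sym (y (n - j)%nat)) in T3.
  lra.
Qed.

Lemma om_exists (v : C) : exists om, Cmod om = 1 /\ fst (om * v)%C = Cmod v.
Proof.
  destruct (Req_dec (Cmod v) 0) as [H0|H0].
  - exists (RtoC 1). split; [apply Cmod_1|]. apply Cmod_eq_0 in H0. rewrite H0.
    rewrite Cmod_0. simpl. ring.
  - assert (Hv : v <> RtoC 0) by (intro E; apply H0; rewrite E; apply Cmod_0).
    assert (Hm : RtoC (Cmod v) <> RtoC 0) by (intro E; injection E; intro; apply H0; assumption).
    exists (Cconj v / RtoC (Cmod v))%C. split.
    + rewrite Cmod_div by exact Hm. rewrite Cmod_conj, Cmod_R, Rabs_pos_eq by apply Cmod_ge_0.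
      field. exact H0.
    + replace (Cconj v / RtoC (Cmod v) * v)%C with ((v * Cconj v) / RtoC (Cmod v))%C by (field; exact Hm).
      rewrite <- Cmod2_conj. 
      replace (RtoC (Cmod v ^ 2) / RtoC (Cmod v))%C with (RtoC (Cmod v)).
      * reflexivity.
      * field_simplify_eq; [|exact Hm]. unfold RtoC. apply injective_projections; simpl; ring.
Qed.

Lemma beta_eq (Y1 Y2 q : C) : Cmod q < 1 ->
  Y1 = ((Y1 - Cconj Y2 * q) / RtoC (1 - Cmod q ^ 2) +
        Cconj ((Y2 - Cconj Y1 * q) / RtoC (1 - Cmod q ^ 2)) * q)%C.
Proof.
  intro Hq. assert (HD : 0 < 1 - Cmod q ^ 2) by (pose proof (Cmod_ge_0 q); nra).
  rewrite Cmod2 in HD |- *.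
  destruct Y1 as [a1 a2], Y2 as [b1 b2], q as [q1 q2]. simpl fst in *; simpl snd in *.
  unfold Cdiv, Cinv, Cconj, Cmult, Cminus, Cplus, Copp, RtoC. simpl.
  apply injective_projections; simpl; field; nra.
Qed.

Section GammaToG.
Variable n : nat.
Variable psiy : C -> nat -> C.
Variable psiq : C -> C.
Hypothesis Hn : (2 <= n)%nat.
Hypothesis Hhy : forall j, (1 <= j <= n - 1)%nat -> holo_on_D (fun z => psiy z j).
Hypothesis Hhq : holo_on_D psiq.
Hypothesis HS : forall z, inD z -> tGamma n (psiy z) (psiq z).
Hypothesis H0y : forall j, (1 <= j <= n - 1)%nat -> psiy (RtoC 0) j = RtoC 0.
Hypothesis H0q : psiq (RtoC 0) = RtoC 0.

Lemma strict_q w : inD w -> Cmod (psiq w) < 1.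
Proof.
  apply schwarz_strict; auto.
  intros z Hz. apply (clos_q n (psiy z)). apply HS. exact Hz.
Qed.

Lemma strict_y k w : (1 <= k <= n - 1)%nat -> inD w -> Cmod (psiy w k) < binom n k.
Proof.
  intros Hk Hw. set (c := binom n k). assert (Hc : 0 < c) by apply binom_pos.
  assert (Hic : RtoC (/ c) <> RtoC 0) by (intro E; injection E; intro E'; 
    pose proof (Rinv_0_lt_compat c Hc); lra).
  pose proof (schwarz_strict (fun u => psiy u k * RtoC (/ c))%C) as HS'.
  assert (Hmod : forall u, Cmod (psiy u k * RtoC (/ c))%C = Cmod (psiy u k) / c).
  { intro u. rewrite Cmod_mult, Cmod_R, Rabs_pos_eq; [reflexivity|]. 
    apply Rlt_le, Rinv_0_lt_compat; exact Hc. }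
  assert (H : Cmod (psiy w k * RtoC (/ c))%C < 1).
  { apply HS'; auto.
    - intros z Hz. apply (Cd_mult (fun u => psiy u k) (fun _ => RtoC (/ c))).
      + apply Hhy; auto.
      + apply Cd_const.
    - intros z Hz. rewrite Hmod. 
      pose proof (clos_y n (psiy z) (psiq z) k (HS z Hz) Hk). fold c in H.
      apply Rmult_le_reg_r with c; [exact Hc|]. unfold Rdiv. 
      rewrite Rmult_assoc, Rinv_l by lra. lra.
    - rewrite H0y by exact Hk. ring. }
  rewrite Hmod in H. apply Rmult_lt_reg_r with (/ c); [apply Rinv_0_lt_compat; exact Hc|].
  rewrite Rinv_r by lra. exact H.
Qed.

Lemma key j z : (1 <= j <= n - 1)%nat -> inD z ->
  2 * binom n j * Cmod (psiy z (n - j)%nat - Cconj (psiy z j) * psiq z)%C <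
  binom n j ^ 2 * (1 - Cmod (psiq z) ^ 2) + Cmod (psiy z (n - j)%nat) ^ 2 - Cmod (psiy z j) ^ 2.
Proof.
  intros Hj Hz. set (c := binom n j). assert (Hc : 0 < c) by apply binom_pos.
  assert (Hj' : (1 <= n - j <= n - 1)%nat) by lia.
  assert (Hcs : binom n (n - j) = c) by (apply binom_sym'; lia).
  set (v := (psiy z (n - j)%nat - Cconj (psiy z j) * psiq z)%C).
  destruct (om_exists v) as [om [Hom Hfv]].
  set (num := fun u => (RtoC c * psiq u * om - psiy u j)%C).
  set (den := fun u => (RtoC c - psiy u (n - j)%nat * om)%C).
  assert (Hden : forall u, inD u -> 0 < Cmod (den u)).
  { intros u Hu. pose proof (strict_y (n - j) u Hj' Hu) as Hlt. rewrite Hcs in Hlt.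
    unfold den. pose proof (Cmod_tri3 (RtoC c) (psiy u (n - j)%nat * om)%C) as T.
    rewrite Cmod_mult, Hom, Rmult_1_r, Cmod_R, Rabs_pos_eq in T by lra.
    lra. }
  assert (Hden0 : forall u, inD u -> den u <> RtoC 0).
  { intros u Hu E. pose proof (Hden u Hu). rewrite E, Cmod_0 in H. lra. }
  pose proof (schwarz_strict (fun u => num u / den u)%C) as HS'.
  assert (Hf0 : (num (RtoC 0) / den (RtoC 0))%C = RtoC 0).
  { unfold num, den. rewrite H0q, (H0y j Hj), (H0y (n - j)%nat Hj').
    replace (RtoC c * RtoC 0 * om - RtoC 0)%C with (RtoC 0) by ring. unfold Cdiv. ring. }
  assert (HG : Cmod (num z / den z)%C < 1).
  { apply HS'; [| |exact Hf0|exact Hz].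
    - intros u Hu. apply (Cd_div num den); [| |apply Hden0; exact Hu].
      + unfold num. apply (Cd_minus (fun u => RtoC c * psiq u * om)%C (fun u => psiy u j)); [|apply Hhy; auto].
        apply (Cd_mult (fun u => RtoC c * psiq u)%C (fun _ => om)); [|apply Cd_const].
        apply (Cd_mult (fun _ => RtoC c) psiq); [apply Cd_const|apply Hhq; exact Hu].
      + unfold den. apply (Cd_minus (fun _ => RtoC c) (fun u => psiy u (n - j)%nat * om)%C); [apply Cd_const|].
        apply (Cd_mult (fun u => psiy u (n - j)%nat) (fun _ => om)); [apply Hhy; auto|apply Cd_const].
    - intros u Hu. rewrite Cmod_div by (apply Hden0; exact Hu).
      pose proof (Hden u Hu).
      pose proof (clos_om n (psiy u) (psiq u) j om (HS u Hu) Hj Hom) as Hc'. fold c in Hc'.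
      apply Rmult_le_reg_r with (Cmod (den u)); [lra|]. unfold Rdiv.
      rewrite Rmult_assoc, Rinv_l by lra. unfold num, den. lra. }
  rewrite Cmod_div in HG by (apply Hden0; exact Hz).
  pose proof (Hden z Hz).
  assert (Hlt : Cmod (num z) < Cmod (den z)).
  { apply Rmult_lt_reg_r with (/ Cmod (den z)); [apply Rinv_0_lt_compat; lra|].
    rewrite Rinv_r by lra. exact HG. }
  assert (Hsq : Cmod (num z) ^ 2 < Cmod (den z) ^ 2).
  { pose proof (Cmod_ge_0 (num z)). nra. }
  pose proof (ident1 c (psiq z) (psiy z j) (psiy z (n - j)%nat) om Hom) as E.
  fold v in E. rewrite Hfv in E. unfold num, den in Hsq. lra.
Qed.

Lemma to_G z : inD z -> tG n (psiy z) (psiq z).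
Proof.
  intros Hz. pose proof (strict_q z Hz) as Hq.
  set (q := psiq z) in *.
  set (D := 1 - Cmod q ^ 2).
  assert (HD : 0 < D) by (unfold D; pose proof (Cmod_ge_0 q); nra).
  assert (HD0 : RtoC D <> RtoC 0) by (intro E; injection E; lra).
  split; [exact Hq|].
  exists (fun k => (psiy z k - Cconj (psiy z (n - k)%nat) * q) / RtoC D)%C.
  intros j Hj.
  assert (Hj' : (1 <= n - j <= n - 1)%nat) by lia.
  assert (nn : (n - (n - j))%nat = j) by lia.
  rewrite nn. split.
  - apply beta_eq. exact Hq.
  - rewrite !Cmod_div by exact HD0. rewrite Cmod_R, Rabs_pos_eq by lra.
    pose proof (key j z Hj Hz) as K1. pose proof (key (n - j)%nat z Hj' Hz) as K2.
    rewrite nn in K2. rewrite binom_sym' in K2 by lia. fold q in K1, K2. fold D in K1, K2.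
    set (c := binom n j) in *. assert (Hc : 0 < c) by apply binom_pos.
    set (u := Cmod (psiy z j - Cconj (psiy z (n - j)%nat) * q)%C) in *.
    set (v := Cmod (psiy z (n - j)%nat - Cconj (psiy z j) * q)%C) in *.
    assert (Huv : u + v < c * D).
    { apply Rmult_lt_reg_l with (2 * c); [lra|]. nra. }
    apply Rmult_lt_reg_r with D; [exact HD|]. unfold Rdiv.
    replace ((u * / D + v * / D) * D) with (u + v) by (field; lra). lra.
Qed.

End GammaToG.

Lemma G_sub_Gamma n y q : tG n y q -> tGamma n y q.
Proof.
  intros H eps Heps. exists y, q. split; [exact H|]. split.
  - intros j _. replace (y j - y j)%C with (RtoC 0) by ring. rewrite Cmod_0. exact Heps.
  - replace (q - q)%C with (RtoC 0) by ring. rewrite Cmod_0. exact Heps.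
Qed.

Theorem mainTheorem12 (n : nat) (lam0 : C) (y0 : nat -> C) (q0 : C) :
  (2 <= n)%nat ->
  inD lam0 -> lam0 <> RtoC 0 ->
  tG n y0 q0 ->
  ((exists (psiy : C -> nat -> C) (psiq : C -> C),
       analytic_interp (tGamma n) n psiy psiq lam0 y0 q0)
   <->
   (exists (psiy : C -> nat -> C) (psiq : C -> C),
       analytic_interp (tG n) n psiy psiq lam0 y0 q0)).
Proof.
  intros Hn Hl Hl0 HG. split.
  - intros [psiy [psiq [Hy [Hq [HS [H0y [H0q [Hly Hlq]]]]]]]].
    exists psiy, psiq.
    refine (conj Hy (conj Hq (conj _ (conj H0y (conj H0q (conj Hly Hlq)))))).
    intros z Hz. apply to_G; auto.
  - intros [psiy [psiq [Hy [Hq [HS [H0y [H0q [Hly Hlq]]]]]]]].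
    exists psiy, psiq.
    refine (conj Hy (conj Hq (conj _ (conj H0y (conj H0q (conj Hly Hlq)))))).
    intros z Hz. apply G_sub_Gamma. auto.
Qed.
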